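(* Let $D\subseteq\mathbb{R}$ and let $f,g:D\to\mathbb{R}$ be ordinal decreasing. Let $h=f+g$. Then $h$ is ordinal decreasing and $o(h)\le o(f)\otimes o(g)$.
   Context: For $u:D\to\mathbb{R}$, a strictly decreasing sequence $x_1>x_2>\cdots$ in $D$ is $u$-bad if $u(x_1)>u(x_2)>\cdots$; $u$ is ordinal decreasing if there is no infinite $u$-bad sequence. For ordinal decreasing $u$, the tree $T_u$ has a vertex for each finite $u$-bad sequence (the empty sequence being the root), the parent of $\langle x_1>\cdots>x_n\rangle$ being $\langle x_1>\cdots>x_{n-1}\rangle$; each vertex gets ordinal height $o(v)=\sup_{w\text{ child of }v}(o(w)+1)$ and $o(u)$ is the height of the root. The natural product: if $\alpha=\omega^{\alpha_1}+\cdots+\omega^{\alpha_n}$ and $\beta=\omega^{\beta_1}+\cdots+\omega^{\beta_m}$ in Cantor normal form, then $\alpha\otimes\beta=\bigoplus_{i\le n,\,j\le m}\omega^{\alpha_i\oplus\beta_j}$, where $\oplus$ is the natural sum (write both ordinals in Cantor normal form and merge the exponents in nonincreasing order). *)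

(* Defs.v *)
From Stdlib Require Import Reals List Sorting.Sorted Permutation ClassicalEpsilon.
Open Scope R_scope.

(* [Node Ia f] denotes the ordinal sup_{i : I} (f i + 1), i.e. exactly the
   height of a (well-founded) tree whose root has children of heights f i. *)
Inductive Ord : Type := Node (I : Type) (f : I -> Ord).

Fixpoint ole (a b : Ord) {struct a} : Prop :=
  match a, b with
  | Node Ia f, Node Ja g => forall i : Ia, exists j : Ja, ole (f i) (g j)
  end.

Definition oeq (a b : Ord) : Prop := ole a b /\ ole b a.

Definition ozero : Ord := Node False (fun x => False_rect Ord x).

Fixpoint oadd (a b : Ord) {struct b} : Ord :=
  match b with
  | Node Ja g =>
      match a with
      | Node Ia f =>
          Node (Ia + Ja)%type
            (fun k => match k with inl i => f i | inr j => oadd a (g j) end)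
      end
  end.

Fixpoint omuln (a : Ord) (n : nat) : Ord :=
  match n with O => ozero | S m => oadd (omuln a m) a end.

(* omega ^ a *)
Fixpoint oexp (a : Ord) : Ord :=
  match a with
  | Node Ia f =>
      Node (option (Ia * nat))
        (fun k => match k with
                  | None => ozero
                  | Some (i, n) => omuln (oexp (f i)) n
                  end)
  end.

Fixpoint cnf_val (l : list Ord) : Ord :=
  match l with nil => ozero | x :: l' => oadd (oexp x) (cnf_val l') end.

Definition is_cnf (l : list Ord) (alpha : Ord) : Prop :=
  Sorted (fun x y => ole y x) l /\ oeq alpha (cnf_val l).

Definition natsum (alpha beta gamma : Ord) : Prop :=
  exists la lb lc, is_cnf la alpha /\ is_cnf lb beta /\ is_cnf lc gamma /\
    Permutation (la ++ lb) lc.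

(* natural product: gamma = (+)_{i,j} omega^(alpha_i (+) beta_j) *)
Definition natprod (alpha beta gamma : Ord) : Prop :=
  exists la lb lab lc, is_cnf la alpha /\ is_cnf lb beta /\ is_cnf lc gamma /\
    Forall2 (fun p c => natsum (fst p) (snd p) c) (list_prod la lb) lab /\
    Permutation lab lc.

Fixpoint dec_chain (u : R -> R) (l : list R) : Prop :=
  match l with
  | x :: ((y :: _) as l') => y < x /\ u y < u x /\ dec_chain u l'
  | _ => True
  end.

Definition bad (D : R -> Prop) (u : R -> R) (l : list R) : Prop :=
  Forall D l /\ dec_chain u l.

Definition ordinal_decreasing (D : R -> Prop) (u : R -> R) : Prop :=
  ~ exists s : nat -> R, forall n,
      D (s n) /\ s (S n) < s n /\ u (s (S n)) < u (s n).

(* height_of D u v alpha : the vertex v of T_u has ordinal height alpha,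
   where the children of v are the bad sequences v ++ [x]. *)
Inductive height_of (D : R -> Prop) (u : R -> R) (v : list R) : Ord -> Prop :=
  | height_node (h : {x : R | bad D u (v ++ x :: nil)} -> Ord) :
      (forall x, height_of D u (v ++ proj1_sig x :: nil) (h x)) ->
      height_of D u v (Node {x : R | bad D u (v ++ x :: nil)} h).

Definition o (D : R -> Prop) (u : R -> R) : Ord :=
  epsilon (inhabits ozero) (fun alpha => height_of D u nil alpha).

(* Main.v *)
Require Import Defs.
From Stdlib Require Import Reals List Sorting.Sorted Permutation ClassicalEpsilon Classical Lia Lra Wf_nat.

Definition olt (a b : Ord) : Prop :=
  match b with Node J g => exists j, ole a (g j) end.

Lemma ole_node_iff I f b : ole (Node I f) b <-> forall i, olt (f i) b.
Proof. destruct b; simpl; tauto. Qed.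

Lemma ole_refl : forall a, ole a a.
Proof. induction a as [I f IH]; simpl; intro i; exists i; apply IH. Qed.

Lemma ole_trans : forall a b c, ole a b -> ole b c -> ole a c.
Proof.
  induction a as [I f IH]; intros [J g] [K h]; simpl; intros Hab Hbc i.
  destruct (Hab i) as [j Hj]. destruct (Hbc j) as [k Hk]. exists k. eauto.
Qed.

Lemma olt_le_trans a b c : olt a b -> ole b c -> olt a c.
Proof.
  destruct b as [J g], c as [K h]; simpl; intros [j Hj] Hbc.
  destruct (Hbc j) as [k Hk]. exists k. eapply ole_trans; eauto.
Qed.

Lemma ole_lt_trans a b c : ole a b -> olt b c -> olt a c.
Proof.
  destruct c as [K h]; simpl; intros Hab [k Hk]. exists k. eapply ole_trans; eauto.
Qed.

Lemma olt_ole : forall a b, olt a b -> ole a b.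
Proof.
  induction a as [I f IH]; intros [J g] [j Hj].
  apply ole_node_iff. intro i. simpl. exists j.
  apply IH. destruct (g j) as [K h]. simpl in Hj. destruct (Hj i) as [k Hk].
  simpl. exists k. exact Hk.
Qed.

Lemma olt_trans a b c : olt a b -> olt b c -> olt a c.
Proof. intros H1 H2. eapply olt_le_trans; eauto. apply olt_ole; auto. Qed.

Lemma child_lt I f i : olt (f i) (Node I f).
Proof. simpl. exists i. apply ole_refl. Qed.

Lemma olt_wf : well_founded olt.
Proof.
  assert (H : forall b a, ole a b -> Acc olt a).
  { induction b as [J g IH]; intros a Hab. constructor. intros y Hy.
    pose proof (olt_le_trans _ _ _ Hy Hab) as [j Hj]. eapply IH; eauto. }
  intro a. apply (H a). apply ole_refl.
Qed.

Lemma ord_ind (P : Ord -> Prop) :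
  (forall a, (forall a', olt a' a -> P a') -> P a) -> forall a, P a.
Proof. intros H a. apply (well_founded_ind olt_wf). exact H. Qed.

Lemma olt_irrefl a : ~ olt a a.
Proof.
  induction a as [a IH] using ord_ind. intro H. exact (IH a H H).
Qed.

Lemma ole_lt_false a b : ole a b -> olt b a -> False.
Proof. intros H1 H2. apply (olt_irrefl b). eapply olt_le_trans; eauto. Qed.

Lemma ole_total : forall a b, ole a b \/ olt b a.
Proof.
  induction a as [I f IH]; intro b.
  destruct (classic (forall i, olt (f i) b)) as [H|H].
  - left. apply ole_node_iff. exact H.
  - right. apply not_all_ex_not in H. destruct H as [i Hi].
    simpl. exists i. destruct b as [J g]. apply ole_node_iff. intro j.
    destruct (IH i (g j)) as [H|H]; auto.
    exfalso. apply Hi. simpl. exists j. exact H.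
Qed.

Lemma not_lt_le a b : ~ olt b a -> ole a b.
Proof. intro H. destruct (ole_total a b); tauto. Qed.

Lemma not_le_lt a b : ~ ole a b -> olt b a.
Proof. intro H. destruct (ole_total a b); tauto. Qed.

Lemma ozero_le a : ole ozero a.
Proof. destruct a; simpl; intros []. Qed.

Lemma not_lt_zero a : ~ olt a ozero.
Proof. simpl. intros [[] _]. Qed.

Lemma le_zero_lt_false a b : ole a ozero -> olt b a -> False.
Proof. intros H1 H2. apply (not_lt_zero b). eapply olt_le_trans; eauto. Qed.

Definition oeq_refl a : oeq a a := conj (ole_refl a) (ole_refl a).

Lemma oadd_eq I f J g : oadd (Node I f) (Node J g) =
  Node (I + J) (fun k => match k with inl i => f i | inr j => oadd (Node I f) (g j) end).
Proof. reflexivity. Qed.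

Lemma le_add_l a b : ole a (oadd a b).
Proof.
  destruct a as [I f], b as [J g]. rewrite oadd_eq. simpl. intro i.
  exists (inl i). apply ole_refl.
Qed.

Lemma le_add_r : forall b a, ole b (oadd a b).
Proof.
  induction b as [J g IH]; intros [I f]. rewrite oadd_eq. simpl. intro j.
  exists (inr j). apply IH.
Qed.

Lemma add_mono_r : forall b b' a, ole b b' -> ole (oadd a b) (oadd a b').
Proof.
  induction b as [J g IH]; intros [J' g'] [I f] H. rewrite !oadd_eq. simpl. simpl in H.
  intros [i|j].
  - exists (inl i). apply ole_refl.
  - destruct (H j) as [j' Hj']. exists (inr j'). apply IH; auto.
Qed.

Lemma add_mono_l : forall b a a', ole a a' -> ole (oadd a b) (oadd a' b).
Proof.
  induction b as [J g IH]; intros [I f] [I' f'] H. rewrite !oadd_eq. simpl. simpl in H.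
  intros [i|j].
  - destruct (H i) as [i' Hi']. exists (inl i'). exact Hi'.
  - exists (inr j). apply IH; auto.
Qed.

Lemma add_mono a a' b b' : ole a a' -> ole b b' -> ole (oadd a b) (oadd a' b').
Proof. intros. eapply ole_trans. apply add_mono_l; eauto. apply add_mono_r; auto. Qed.

Lemma add_lt_r a b b' : olt b b' -> olt (oadd a b) (oadd a b').
Proof.
  destruct b' as [J' g'], a as [I f]. intros [j' Hj']. rewrite (oadd_eq I f J' g').
  simpl. exists (inr j'). apply add_mono_r. exact Hj'.
Qed.

Lemma add_lt_r' a a' b b' : ole a a' -> olt b b' -> olt (oadd a b) (oadd a' b').
Proof. intros. eapply olt_le_trans. apply add_lt_r; eauto. apply add_mono_l; auto. Qed.

Lemma add_zero_r a : ole (oadd a ozero) a.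
Proof.
  destruct a as [I f]. unfold ozero. rewrite oadd_eq. simpl. intros [i|[]].
  exists i. apply ole_refl.
Qed.

Lemma add_le_zero a b : ole b ozero -> ole (oadd a b) a.
Proof. intro H. eapply ole_trans. apply add_mono_r; eauto. apply add_zero_r. Qed.

Lemma zero_add : forall b, ole (oadd ozero b) b.
Proof.
  induction b as [J g IH]. unfold ozero. rewrite oadd_eq. simpl. intros [[]|j].
  exists j. apply IH.
Qed.

Lemma add_le_intro a b c :
  (forall x, olt x a -> olt x c) -> (forall b', olt b' b -> olt (oadd a b') c) ->
  ole (oadd a b) c.
Proof.
  destruct a as [I f], b as [J g]. intros H1 H2. rewrite oadd_eq. apply ole_node_iff.
  intros [i|j]. apply H1, child_lt. apply H2, child_lt.
Qed.

Lemma lt_add_inv x a b : olt x (oadd a b) ->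
  olt x a \/ exists b', olt b' b /\ ole x (oadd a b').
Proof.
  destruct a as [I f], b as [J g]. rewrite oadd_eq. simpl. intros [[i|j] H].
  - left. exists i. exact H.
  - right. exists (g j). split. apply child_lt. exact H.
Qed.

Lemma add_assoc1 : forall c a b, ole (oadd (oadd a b) c) (oadd a (oadd b c)).
Proof.
  induction c as [K h IH]; intros [I f] [J g].
  apply add_le_intro.
  - intros x Hx. apply lt_add_inv in Hx. destruct Hx as [Hx|[b' [Hb' Hx]]].
    + eapply olt_le_trans. exact Hx. apply le_add_l.
    + eapply ole_lt_trans. exact Hx. apply add_lt_r.
      eapply olt_le_trans. exact Hb'. apply le_add_l.
  - intros b' Hb'. destruct Hb' as [k Hk].
    eapply ole_lt_trans. apply add_mono_r. exact Hk.
    eapply ole_lt_trans. apply IH. apply add_lt_r. rewrite oadd_eq. simpl.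
    exists (inr k). apply ole_refl.
Qed.

Lemma add_assoc2 : forall c a b, ole (oadd a (oadd b c)) (oadd (oadd a b) c).
Proof.
  induction c as [K h IH]; intros [I f] [J g].
  apply add_le_intro.
  - intros x Hx. eapply olt_le_trans. exact Hx.
    eapply ole_trans. apply le_add_l. apply le_add_l.
  - intros b' Hb'. apply lt_add_inv in Hb'. destruct Hb' as [Hb'|[c' [Hc' Hb']]].
    + eapply olt_le_trans. apply add_lt_r. exact Hb'. apply le_add_l.
    + eapply ole_lt_trans. apply add_mono_r. exact Hb'.
      destruct Hc' as [k Hk].
      eapply ole_lt_trans. apply add_mono_r, add_mono_r. exact Hk.
      eapply ole_lt_trans. apply IH. apply add_lt_r. apply child_lt.
Qed.

Lemma omul_S a n : omuln a (S n) = oadd (omuln a n) a.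
Proof. reflexivity. Qed.

Lemma omul_mono_n a : forall m n, (m <= n)%nat -> ole (omuln a m) (omuln a n).
Proof.
  intros m n H. induction H. apply ole_refl.
  eapply ole_trans. exact IHle. rewrite omul_S. apply le_add_l.
Qed.

Lemma omul_mono_a a a' n : ole a a' -> ole (omuln a n) (omuln a' n).
Proof. intro H. induction n. apply ole_refl. rewrite !omul_S. apply add_mono; auto. Qed.

Lemma oexp_pos e : olt ozero (oexp e).
Proof. destruct e. simpl. exists None. exact (ole_refl ozero). Qed.

Lemma omul_lt_S e n : olt (omuln (oexp e) n) (omuln (oexp e) (S n)).
Proof.
  rewrite omul_S. eapply ole_lt_trans. apply (le_add_l _ ozero). apply add_lt_r, oexp_pos.
Qed.

Lemma omul_lt e m n : (m < n)%nat -> olt (omuln (oexp e) m) (omuln (oexp e) n).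
Proof.
  intro H. eapply olt_le_trans. apply omul_lt_S. apply omul_mono_n. lia.
Qed.

Lemma oexp_mono : forall e e', ole e e' -> ole (oexp e) (oexp e').
Proof.
  induction e as [I f IH]; intros [J g] H. simpl in H. simpl.
  intros [[i n]|].
  - destruct (H i) as [j Hj]. exists (Some (j, n)). apply omul_mono_a. apply IH. exact Hj.
  - exists None. apply ole_refl.
Qed.

Lemma omul1_le a : ole (omuln a 1) a.
Proof. simpl. apply zero_add. Qed.
Lemma omul1_ge a : ole a (omuln a 1).
Proof. simpl. apply le_add_r. Qed.

Lemma oexp_lt e e' n : olt e e' -> olt (omuln (oexp e) n) (oexp e').
Proof.
  destruct e' as [J g]. intros [j Hj]. simpl. exists (Some (j, n)).
  apply omul_mono_a, oexp_mono, Hj.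
Qed.

Lemma oexp_lt1 e e' : olt e e' -> olt (oexp e) (oexp e').
Proof. intro H. eapply ole_lt_trans. apply omul1_ge. apply oexp_lt. exact H. Qed.

Lemma lt_oexp_inv x e : olt x (oexp e) ->
  ole x ozero \/ exists e' n, olt e' e /\ ole x (omuln (oexp e') n).
Proof.
  destruct e as [I f]. simpl. intros [[[i n]|] H].
  - right. exists (f i), n. split. apply child_lt. exact H.
  - left. exact H.
Qed.

Lemma chk e : forall K x, olt x (omuln (oexp e) K) ->
  exists K' w, (K' < K)%nat /\ olt w (oexp e) /\ ole x (oadd (omuln (oexp e) K') w).
Proof.
  induction K; intros x H.
  - exfalso. exact (not_lt_zero _ H).
  - rewrite omul_S in H. apply lt_add_inv in H. destruct H as [H|[b' [Hb' H]]].
    + destruct (IHK x H) as [K' [w [H1 [H2 H3]]]]. exists K', w. repeat split; auto.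
    + exists K, b'. repeat split; auto.
Qed.

Lemma chx e m t x : olt x (oadd (omuln (oexp e) m) t) ->
  (exists t', olt t' t /\ ole x (oadd (omuln (oexp e) m) t')) \/
  (exists m' w, (m' < m)%nat /\ olt w (oexp e) /\ ole x (oadd (omuln (oexp e) m') w)).
Proof.
  intro H. apply lt_add_inv in H. destruct H as [H|H]; [right|left; exact H].
  apply chk. exact H.
Qed.

Fixpoint nsum (a : Ord) : Ord -> Ord :=
  match a with
  | Node Ia f => fix nsum_a (b : Ord) : Ord :=
      match b with
      | Node Ja g => Node (Ia + Ja) (fun k => match k with
                                           | inl i => nsum (f i) (Node Ja g)
                                           | inr j => nsum_a (g j) end)
      end
  end.

Lemma nsum_eq I f J g : nsum (Node I f) (Node J g) =
  Node (I + J) (fun k => match k with inl i => nsum (f i) (Node J g)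
                                 | inr j => nsum (Node I f) (g j) end).
Proof. reflexivity. Qed.

Lemma nsum_le_intro a b c :
  (forall x, olt x a -> olt (nsum x b) c) -> (forall y, olt y b -> olt (nsum a y) c) ->
  ole (nsum a b) c.
Proof.
  destruct a as [I f], b as [J g]. intros H1 H2. rewrite nsum_eq. apply ole_node_iff.
  intros [i|j]. apply H1, child_lt. apply H2, child_lt.
Qed.

Lemma lt_nsum_inv x a b : olt x (nsum a b) ->
  (exists a', olt a' a /\ ole x (nsum a' b)) \/ (exists b', olt b' b /\ ole x (nsum a b')).
Proof.
  destruct a as [I f], b as [J g]. rewrite nsum_eq. simpl. intros [[i|j] H].
  - left. exists (f i). split. apply child_lt. exact H.
  - right. exists (g j). split. apply child_lt. exact H.
Qed.

Lemma nsum_mono : forall a a' b b', ole a a' -> ole b b' -> ole (nsum a b) (nsum a' b').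
Proof.
  induction a as [I f IHa]; intros a' b; induction b as [J g IHb]; intros b' Ha Hb.
  destruct a' as [I' f'], b' as [J' g']. rewrite !nsum_eq. simpl in Ha, Hb. apply ole_node_iff.
  intros [i|j].
  - destruct (Ha i) as [i' Hi']. exists (inl i'). apply IHa; auto.
  - destruct (Hb j) as [j' Hj']. exists (inr j'). apply IHb; auto.
Qed.

Lemma nsum_lt_l a a' b b' : olt a a' -> ole b b' -> olt (nsum a b) (nsum a' b').
Proof.
  destruct a' as [I' f'], b' as [J' g']. intros [i' Hi'] Hb. rewrite nsum_eq.
  exists (inl i'). apply nsum_mono; auto.
Qed.

Lemma nsum_lt_r a a' b b' : ole a a' -> olt b b' -> olt (nsum a b) (nsum a' b').
Proof.
  destruct a' as [I' f'], b' as [J' g']. intros Ha [j' Hj']. rewrite nsum_eq.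
  exists (inr j'). apply nsum_mono; auto.
Qed.

Lemma nsum_le_l : forall a b, ole a (nsum a b).
Proof.
  induction a as [I f IH]; intros [J g]. rewrite nsum_eq. apply ole_node_iff. intro i.
  exists (inl i). apply IH.
Qed.

Lemma nsum_le_r : forall b a, ole b (nsum a b).
Proof.
  induction b as [J g IH]; intros [I f]. rewrite nsum_eq. apply ole_node_iff. intro j.
  exists (inr j). apply IH.
Qed.

Lemma nsum_comm : forall a b, ole (nsum a b) (nsum b a).
Proof.
  induction a as [I f IHa]; intro b; induction b as [J g IHb].
  rewrite !nsum_eq. apply ole_node_iff. intros [i|j].
  - exists (inr i). apply IHa.
  - exists (inl j). apply IHb.
Qed.

Lemma nsum_assoc1 : forall a b c, ole (nsum (nsum a b) c) (nsum a (nsum b c)).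
Proof.
  induction a as [a IHa] using ord_ind. induction b as [b IHb] using ord_ind.
  induction c as [c IHc] using ord_ind.
  apply nsum_le_intro.
  - intros x Hx. apply lt_nsum_inv in Hx. destruct Hx as [[a' [Ha' Hx]]|[b' [Hb' Hx]]].
    + eapply ole_lt_trans. apply nsum_mono. exact Hx. apply ole_refl.
      eapply ole_lt_trans. apply IHa; auto. apply nsum_lt_l; auto. apply ole_refl.
    + eapply ole_lt_trans. apply nsum_mono. exact Hx. apply ole_refl.
      eapply ole_lt_trans. apply IHb; auto. apply nsum_lt_r. apply ole_refl.
      apply nsum_lt_l; auto. apply ole_refl.
  - intros y Hy. eapply ole_lt_trans. apply IHc; auto.
    apply nsum_lt_r. apply ole_refl. apply nsum_lt_r; auto. apply ole_refl.
Qed.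

Lemma nsum_assoc2 a b c : ole (nsum a (nsum b c)) (nsum (nsum a b) c).
Proof.
  eapply ole_trans. apply nsum_comm.
  eapply ole_trans. apply nsum_assoc1.
  eapply ole_trans. apply nsum_comm.
  eapply ole_trans. apply nsum_assoc1.
  apply nsum_comm.
Qed.

Lemma nsum_zero_r : forall a, ole (nsum a ozero) a.
Proof.
  induction a as [a IH] using ord_ind. apply nsum_le_intro.
  - intros x Hx. eapply ole_lt_trans. apply IH; auto. exact Hx.
  - intros y Hy. exfalso. exact (not_lt_zero _ Hy).
Qed.

Lemma nsum_zero_l a : ole (nsum ozero a) a.
Proof. eapply ole_trans. apply nsum_comm. apply nsum_zero_r. Qed.

Lemma add_le_nsum : forall b a, ole (oadd a b) (nsum a b).
Proof.
  induction b as [b IH] using ord_ind. intro a. apply add_le_intro.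
  - intros x Hx. eapply olt_le_trans. exact Hx. apply nsum_le_l.
  - intros b' Hb'. eapply ole_lt_trans. apply IH; auto. apply nsum_lt_r; auto. apply ole_refl.
Qed.

Lemma nsum_lt_both a a' b b' : olt a a' -> olt b b' -> olt (nsum a b) (nsum a' b').
Proof. intros. apply nsum_lt_l; auto. apply olt_ole; auto. Qed.

Definition W e n := omuln (oexp e) n.

Lemma N_lemma e
  (H3e : forall a b, olt a (oexp e) -> olt b (oexp e) -> olt (nsum a b) (oexp e)) :
  forall m t n s, olt t (oexp e) -> olt s (oexp e) ->
  ole (nsum (oadd (W e m) t) (oadd (W e n) s)) (oadd (W e (m + n)) (nsum t s)).
Proof.
  intros m. induction m as [m IHm] using (well_founded_induction lt_wf).
  intros t. induction t as [t IHt] using ord_ind.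
  intros n. induction n as [n IHn] using (well_founded_induction lt_wf).
  intros s. induction s as [s IHs] using ord_ind.
  intros Ht Hs. apply nsum_le_intro.
  - intros x Hx. apply chx in Hx. destruct Hx as [[t' [Ht' Hx]]|[m' [w [Hm' [Hw Hx]]]]].
    + eapply ole_lt_trans. apply nsum_mono. exact Hx. apply ole_refl.
      eapply ole_lt_trans. apply IHt; auto. eapply olt_trans; eauto.
      apply add_lt_r. apply nsum_lt_l; auto. apply ole_refl.
    + eapply ole_lt_trans. apply nsum_mono. exact Hx. apply ole_refl.
      eapply ole_lt_trans. apply IHm; auto.
      eapply olt_le_trans. apply add_lt_r. apply H3e; eauto.
      unfold W. rewrite <- omul_S. eapply ole_trans. apply omul_mono_n.
      2: apply le_add_l. lia.
  - intros y Hy. apply chx in Hy. destruct Hy as [[s' [Hs' Hy]]|[n' [w [Hn' [Hw Hy]]]]].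
    + eapply ole_lt_trans. apply nsum_mono. apply ole_refl. exact Hy.
      eapply ole_lt_trans. apply IHs; auto. eapply olt_trans; eauto.
      apply add_lt_r. apply nsum_lt_r; auto. apply ole_refl.
    + eapply ole_lt_trans. apply nsum_mono. apply ole_refl. exact Hy.
      eapply ole_lt_trans. apply IHn; auto.
      eapply olt_le_trans. apply add_lt_r. apply H3e; eauto.
      unfold W. rewrite <- omul_S. eapply ole_trans. apply omul_mono_n.
      2: apply le_add_l. lia.
Qed.

Theorem H3 : forall c a b, olt a (oexp c) -> olt b (oexp c) -> olt (nsum a b) (oexp c).
Proof.
  induction c as [c IH] using ord_ind. intros a b Ha Hb.
  destruct (lt_oexp_inv _ _ Ha) as [Ha0|[e1 [m [He1 Ha1]]]].
  { eapply ole_lt_trans. apply nsum_mono. exact Ha0. apply ole_refl.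
    eapply ole_lt_trans. apply nsum_zero_l. exact Hb. }
  destruct (lt_oexp_inv _ _ Hb) as [Hb0|[e2 [n [He2 Hb1]]]].
  { eapply ole_lt_trans. apply nsum_mono. apply ole_refl. exact Hb0.
    eapply ole_lt_trans. apply nsum_zero_r. exact Ha. }
  assert (exists e, olt e c /\ ole e1 e /\ ole e2 e) as [e [He [H1 H2]]].
  { destruct (ole_total e1 e2) as [H|H].
    - exists e2. repeat split; auto. apply ole_refl.
    - exists e1. repeat split; auto. apply ole_refl. apply olt_ole; auto. }
  eapply ole_lt_trans. apply nsum_mono.
  - eapply ole_trans. exact Ha1. eapply ole_trans. apply omul_mono_a, oexp_mono, H1.
    apply (le_add_l _ ozero).
  - eapply ole_trans. exact Hb1. eapply ole_trans. apply omul_mono_a, oexp_mono, H2.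
    apply (le_add_l _ ozero).
  - eapply ole_lt_trans. apply (N_lemma e (IH e He)); apply oexp_pos.
    eapply ole_lt_trans. apply add_le_zero. apply nsum_zero_r.
    apply oexp_lt. exact He.
Qed.

Lemma W_lemma c w : olt w (oexp c) -> ole (nsum (oexp c) w) (oadd (oexp c) w).
Proof.
  intro Hw.
  pose proof (N_lemma c (H3 c) 1 ozero 0 w (oexp_pos c) Hw) as H.
  eapply ole_trans. 2: eapply ole_trans. 2: exact H.
  - apply nsum_mono. eapply ole_trans. apply omul1_ge. apply le_add_l. apply le_add_r.
  - apply add_mono. apply omul1_le. apply nsum_zero_l.
Qed.

Lemma Z_lemma c : forall u Z, ole u (oexp c) ->
  ole (nsum u (oadd (oexp c) Z)) (oadd (oexp c) (nsum u Z)).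
Proof.
  induction u as [u IHu] using ord_ind. induction Z as [Z IHZ] using ord_ind.
  intros Hu. apply nsum_le_intro.
  - intros x Hx. eapply ole_lt_trans. apply IHu; auto. apply olt_ole.
    eapply olt_le_trans; eauto.
    apply add_lt_r. apply nsum_lt_l; auto. apply ole_refl.
  - intros y Hy. apply lt_add_inv in Hy. destruct Hy as [Hy|[Z' [HZ' Hy]]].
    + destruct (ole_total (oexp c) u) as [Hcu|Hcu].
      * eapply ole_lt_trans. apply nsum_mono. exact Hu. apply ole_refl.
        eapply ole_lt_trans. apply W_lemma; auto.
        eapply olt_le_trans. apply add_lt_r. exact Hy.
        apply add_mono_r. eapply ole_trans. exact Hcu. apply nsum_le_l.
      * eapply olt_le_trans. apply H3; eauto. apply le_add_l.
    + eapply ole_lt_trans. apply nsum_mono. apply ole_refl. exact Hy.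
      eapply ole_lt_trans. apply IHZ; auto.
      apply add_lt_r. apply nsum_lt_r; auto. apply ole_refl.
Qed.

Definition ROrd := fun x y : Ord => ole y x.

Lemma ROrd_trans : Relations_1.Transitive ROrd.
Proof. intros x y z H1 H2. unfold ROrd in *. eapply ole_trans; eauto. Qed.

Definition nsumL (l : list Ord) : Ord := fold_right (fun c acc => nsum (oexp c) acc) ozero l.

Lemma CNFLT c : forall S, Forall (fun d => olt d c) S -> olt (cnf_val S) (oexp c).
Proof.
  induction S as [|d S IH]; intro H; cbn [cnf_val].
  - apply oexp_pos.
  - inversion H; subst. eapply ole_lt_trans. apply add_le_nsum.
    apply H3. apply oexp_lt1; auto. auto.
Qed.

Lemma L2 : forall S c, StronglySorted ROrd S -> Forall (fun d => ole d c) S ->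
  ole (nsum (oexp c) (cnf_val S)) (oadd (oexp c) (cnf_val S)).
Proof.
  induction S as [|d S IH]; intros c HS HF; cbn [cnf_val].
  - eapply ole_trans. apply nsum_zero_r. apply le_add_l.
  - inversion HS as [|? ? HS2 HF2]; subst. inversion HF as [|? ? Hdc HF']; subst.
    destruct (ole_total c d) as [Hcd|Hdc'].
    + eapply ole_trans. apply nsum_mono. apply ole_refl. apply add_mono_l, oexp_mono, Hdc.
      eapply ole_trans. apply Z_lemma. apply ole_refl.
      eapply ole_trans. apply add_mono_r. apply IH; auto.
      apply add_mono_r. apply add_mono_l, oexp_mono, Hcd.
    + apply W_lemma. apply (CNFLT c (d :: S)). constructor; auto.
      eapply Forall_impl. 2: exact HF2. intros a Ha. eapply ole_lt_trans; eauto.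
Qed.


Lemma bridgeB : forall S, StronglySorted ROrd S -> ole (nsumL S) (cnf_val S).
Proof.
  induction S as [|c S IH]; intro HS; cbn [cnf_val nsumL fold_right]. apply ole_refl.
  inversion HS as [|? ? HS2 HF2]; subst.
  eapply ole_trans. apply nsum_mono. apply ole_refl. apply IH; auto.
  apply L2; auto.
Qed.

Lemma bridgeB' : forall L, ole (cnf_val L) (nsumL L).
Proof.
  induction L as [|c L IH]; cbn [cnf_val nsumL fold_right]. apply ole_refl.
  eapply ole_trans. apply add_le_nsum. apply nsum_mono; auto. apply ole_refl.
Qed.

Lemma nsumL_app1 : forall l1 l2, ole (nsumL (l1 ++ l2)) (nsum (nsumL l1) (nsumL l2)).
Proof.
  induction l1 as [|c l1 IH]; intros l2; cbn [cnf_val nsumL fold_right]. apply nsum_le_r.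
  eapply ole_trans. apply nsum_mono. apply ole_refl. apply IH. apply nsum_assoc2.
Qed.

Lemma nsumL_app2 : forall l1 l2, ole (nsum (nsumL l1) (nsumL l2)) (nsumL (l1 ++ l2)).
Proof.
  induction l1 as [|c l1 IH]; intros l2; cbn [cnf_val nsumL fold_right]. apply nsum_zero_l.
  eapply ole_trans. apply nsum_assoc1. apply nsum_mono. apply ole_refl. apply IH.
Qed.

Lemma nsumL_perm : forall l l', Permutation l l' -> ole (nsumL l) (nsumL l').
Proof.
  intros l l' H. induction H; cbn [cnf_val nsumL fold_right].
  - apply ole_refl.
  - apply nsum_mono; auto. apply ole_refl.
  - eapply ole_trans. apply nsum_assoc2. eapply ole_trans. 2: apply nsum_assoc1.
    apply nsum_mono. apply nsum_comm. apply ole_refl.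
  - eapply ole_trans; eauto.
Qed.

Lemma nsumL_mono : forall l l', Forall2 ole l l' -> ole (nsumL l) (nsumL l').
Proof.
  intros l l' H. induction H; cbn [cnf_val nsumL fold_right]. apply ole_refl.
  apply nsum_mono; auto. apply oexp_mono; auto.
Qed.

Lemma min_exists (P : Ord -> Prop) : (exists x, P x) -> exists x, P x /\ forall y, olt y x -> ~ P y.
Proof.
  intros [x0 Hx0]. destruct (classic (exists x, P x /\ forall y, olt y x -> ~ P y)) as [H|H]; auto.
  exfalso. assert (forall x, ~ P x) as HP.
  { induction x as [x IH] using ord_ind. intro Hx. apply H. exists x. split; auto. }
  exact (HP x0 Hx0).
Qed.

Lemma le_exp_self : forall a, ole a (oexp a).
Proof.
  induction a as [I f IH]. apply ole_node_iff. intro i.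
  exists (Some (i, 1%nat)). eapply ole_trans. apply IH. apply omul1_ge.
Qed.

Definition osucc a := Node unit (fun _ => a).

Lemma lt_exp_succ a : olt a (oexp (osucc a)).
Proof.
  exists (Some (tt, 1%nat)). eapply ole_trans. apply le_exp_self. apply omul1_ge.
Qed.

Lemma SUB : forall al a, ole a al -> exists b, oeq (oadd a b) al.
Proof.
  induction al as [J g IH]; intros a Ha.
  set (bj := fun j : {j : J | ole a (g j)} =>
         epsilon (inhabits ozero) (fun b => oeq (oadd a b) (g (proj1_sig j)))).
  assert (Hbj : forall j, oeq (oadd a (bj j)) (g (proj1_sig j))).
  { intros [j Hj]. unfold bj. apply epsilon_spec. apply IH. exact Hj. }
  exists (Node _ bj). split.
  - apply add_le_intro.
    + intros x Hx. eapply olt_le_trans; eauto.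
    + intros b' [j Hb']. eapply ole_lt_trans. apply add_mono_r. exact Hb'.
      eapply ole_lt_trans. apply (proj1 (Hbj j)). apply child_lt.
  - apply ole_node_iff. intro j. destruct (classic (ole a (g j))) as [H|H].
    + eapply ole_lt_trans. apply (proj2 (Hbj (exist _ j H))). apply add_lt_r.
      apply (child_lt _ bj (exist _ j H)).
    + apply not_le_lt in H. eapply olt_le_trans. exact H. apply le_add_l.
Qed.

Lemma add_cancel_lt a b c : olt (oadd a b) (oadd a c) -> olt b c.
Proof.
  intro H. destruct (ole_total c b) as [H'|H']; auto. exfalso.
  eapply ole_lt_false. 2: exact H. apply add_mono_r. exact H'.
Qed.

Lemma In_exp_le : forall L d, In d L -> ole (oexp d) (cnf_val L).
Proof.
  induction L as [|d' L IH]; intros d H; cbn [cnf_val]. destruct H.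
  destruct H as [H|H]. subst. apply le_add_l.
  eapply ole_trans. apply IH; auto. apply le_add_r.
Qed.

Lemma rep_app (e : Ord) k L : repeat e k ++ e :: L = e :: (repeat e k ++ L).
Proof. induction k; simpl; congruence. Qed.

Lemma REPVAL e : forall k X L, oeq X (cnf_val L) ->
  oeq (oadd (W e k) X) (cnf_val (repeat e k ++ L)).
Proof.
  induction k; intros X L [H1 H2].
  - simpl. split. eapply ole_trans. apply zero_add. auto.
    eapply ole_trans. exact H2. apply le_add_r.
  - assert (oeq (oadd (oexp e) X) (cnf_val (e :: L))) as HX.
    { cbn [cnf_val]. split; apply add_mono_r; auto. }
    destruct (IHk _ _ HX) as [K1 K2]. rewrite rep_app in K1, K2.
    unfold W in *. rewrite omul_S. split.
    + eapply ole_trans. apply add_assoc1. exact K1.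
    + eapply ole_trans. exact K2. apply add_assoc2.
Qed.

Lemma find_k e al : forall n, olt al (W e n) -> ole (oexp e) al ->
  exists k, (1 <= k)%nat /\ ole (W e k) al /\ olt al (W e (S k)).
Proof.
  induction n; intros H1 H2.
  - exfalso. exact (not_lt_zero _ H1).
  - destruct (classic (olt al (W e n))) as [H|H]. apply IHn; auto.
    apply not_lt_le in H. destruct n.
    + exfalso. eapply ole_lt_false. exact H2. eapply olt_le_trans. exact H1. apply omul1_le.
    + exists (S n). repeat split; auto. lia.
Qed.

Lemma SortedRep e : forall k L, StronglySorted ROrd L -> Forall (fun d => ole d e) L ->
  StronglySorted ROrd (repeat e k ++ L) /\ Forall (fun d => ole d e) (repeat e k ++ L).
Proof.
  induction k; intros L H1 H2; simpl; auto.
  destruct (IHk L H1 H2) as [A B]. split.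
  - constructor; auto.
  - constructor; auto. apply ole_refl.
Qed.

Theorem cnf_exists : forall al, exists L, StronglySorted ROrd L /\ oeq al (cnf_val L).
Proof.
  induction al as [al IH] using ord_ind.
  destruct (classic (ole al ozero)) as [H0|H0].
  { exists nil. split. constructor. split; auto. apply ozero_le. }
  destruct (min_exists (fun e => olt al (oexp e))) as [e0 [He0 Hmin]].
  { exists (osucc al). apply lt_exp_succ. }
  destruct (lt_oexp_inv _ _ He0) as [H|[e [n [He Hn]]]]. contradiction.
  assert (Hea : ole (oexp e) al). { apply not_lt_le. apply Hmin. exact He. }
  destruct (find_k e al (S n)) as [k [Hk1 [Hk2 Hk3]]]; auto.
  { eapply ole_lt_trans. exact Hn. apply omul_lt_S. }
  destruct (SUB al (W e k) Hk2) as [b [Hb1 Hb2]].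
  assert (Hbe : olt b (oexp e)).
  { apply (add_cancel_lt (W e k)). eapply ole_lt_trans. exact Hb1. exact Hk3. }
  assert (Hba : olt b al). { eapply olt_le_trans; eauto. }
  destruct (IH b Hba) as [Lb [HLb1 [HLb2 HLb3]]].
  assert (HF : Forall (fun d => ole d e) Lb).
  { apply Forall_forall. intros d Hd. apply not_lt_le. intro Hlt.
    eapply ole_lt_false. 2: exact Hbe.
    eapply ole_trans. apply oexp_mono. apply olt_ole. exact Hlt.
    eapply ole_trans. apply In_exp_le. exact Hd. exact HLb3. }
  exists (repeat e k ++ Lb). split.
  - apply SortedRep; auto.
  - destruct (REPVAL e k b Lb (conj HLb2 HLb3)) as [R1 R2]. split.
    + eapply ole_trans. exact Hb2. exact R1.
    + eapply ole_trans. exact R2. exact Hb1.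
Qed.

Definition HB (lt : R -> R -> Prop) (X : R -> Prop) (g : Ord) : Prop :=
  exists s : R -> Ord, (forall x, X x -> olt (s x) g) /\
    (forall x y, X x -> X y -> lt y x -> olt (s y) (s x)).

Definition rtrans (lt : R -> R -> Prop) := forall x y z, lt z y -> lt y x -> lt z x.

Lemma HB_sub lt X Y g : HB lt X g -> (forall x, Y x -> X x) -> HB lt Y g.
Proof. intros [s [H1 H2]] H. exists s. split; auto. Qed.

Lemma HB_le lt X g g' : HB lt X g -> ole g g' -> HB lt X g'.
Proof. intros [s [H1 H2]] H. exists s. split; auto. intros. eapply olt_le_trans; eauto. Qed.

Lemma HB_empty lt X g : (forall x, ~ X x) -> HB lt X g.
Proof. intro H. exists (fun _ => ozero). split; intros; exfalso; eapply H; eauto. Qed.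

Definition sdown (lt : R -> R -> Prop) (A : R -> Prop) (phi : R -> Ord) (x : R) : Ord :=
  Node {z : R | A z /\ lt z x} (fun z => phi (proj1_sig z)).

Lemma UNION lt A B X a b : rtrans lt -> HB lt A a -> HB lt B b ->
  (forall x, X x -> A x \/ B x) -> HB lt X (nsum a b).
Proof.
  intros Htr [pa [Ha1 Ha2]] [pb [Hb1 Hb2]] HX.
  assert (K1 : forall (C : R -> Prop) phi x, C x ->
            (forall x y, C x -> C y -> lt y x -> olt (phi y) (phi x)) ->
            ole (sdown lt C phi x) (phi x)).
  { intros C phi x Cx Hm. apply ole_node_iff. intros [z [Cz Lz]]. simpl. auto. }
  assert (K2 : forall (C : R -> Prop) phi x g, (forall x, C x -> olt (phi x) g) ->
            ole (sdown lt C phi x) g).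
  { intros C phi x g Hg. apply ole_node_iff. intros [z [Cz Lz]]. simpl. auto. }
  assert (K3 : forall (C : R -> Prop) phi x y, lt y x -> ole (sdown lt C phi y) (sdown lt C phi x)).
  { intros C phi x y Hyx. apply ole_node_iff. intros [z [Cz Lz]].
    exists (exist _ z (conj Cz (Htr _ _ _ Lz Hyx))). apply ole_refl. }
  assert (K4 : forall (C : R -> Prop) phi x y, C y -> lt y x ->
            (forall x y, C x -> C y -> lt y x -> olt (phi y) (phi x)) ->
            olt (sdown lt C phi y) (sdown lt C phi x)).
  { intros C phi x y Cy Hyx Hm. eapply ole_lt_trans. apply K1; eauto.
    exists (exist _ y (conj Cy Hyx)). apply ole_refl. }
  exists (fun x => nsum (sdown lt A pa x) (sdown lt B pb x)). split.
  - intros x Hx. destruct (HX x Hx) as [H|H].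
    + apply nsum_lt_l. eapply ole_lt_trans. apply K1; eauto. auto. apply K2; auto.
    + apply nsum_lt_r. apply K2; auto. eapply ole_lt_trans. apply K1; eauto. auto.
  - intros x y Hx Hy Hyx. destruct (HX y Hy) as [H|H].
    + apply nsum_lt_l. apply K4; auto. apply K3; auto.
    + apply nsum_lt_r. apply K3; auto. apply K4; auto.
Qed.

Inductive rk_rel (X : R -> Prop) (lt : R -> R -> Prop) : R -> Ord -> Prop :=
| rk_node x (r : {y : R | X y /\ lt y x} -> Ord) :
    (forall y, rk_rel X lt (proj1_sig y) (r y)) -> rk_rel X lt x (Node _ r).

Lemma rk_mono X lt : forall x a, rk_rel X lt x a -> forall b, rk_rel X lt x b -> ole a b.
Proof.
  intros x a H1. induction H1 as [x r Hr IH]. intros b H2.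
  revert r Hr IH. destruct H2 as [x r' Hr']. intros r Hr IH.
  simpl. intro i. exists i. apply IH. apply Hr'.
Qed.

Lemma rk_lt X lt x a y b : rk_rel X lt x a -> X y -> lt y x -> rk_rel X lt y b -> olt b a.
Proof.
  intros H. revert y b. destruct H as [x r Hr]. intros y b Hy Hyx Hb.
  exists (exist _ y (conj Hy Hyx)). eapply rk_mono; eauto. exact (Hr (exist _ y (conj Hy Hyx))).
Qed.

Lemma GLUE lt X g : rtrans lt ->
  (forall x, X x -> exists d, olt d g /\ HB lt (fun y => X y /\ lt y x) d) -> HB lt X g.
Proof.
  intros Htr HG.
  pose (ltX := fun y x => X y /\ X x /\ lt y x).
  assert (HAcc : forall x, X x -> Acc ltX x).
  { intros x Hx. destruct (HG x Hx) as [d [_ [tau [_ Ht]]]].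
    assert (forall o y, X y -> lt y x -> tau y = o -> Acc ltX y) as Hy.
    { induction o as [o IH] using ord_ind. intros y Hy Hyx Heq. constructor.
      intros z Hz'. destruct Hz' as [Hz [_ Hzy]]. eapply IH. 2: exact Hz. 2: eapply Htr; eauto. 2: reflexivity.
      rewrite <- Heq. apply Ht. hnf; split; auto. hnf; split; auto. eapply Htr; eauto. auto. }
    constructor. intros y Hy''. destruct Hy'' as [Hy' [_ Hyx]]. eapply Hy; eauto. }
  assert (HEx : forall x, X x -> exists a, rk_rel X lt x a).
  { intros x Hx. pose proof (HAcc x Hx) as Ha. revert Hx. induction Ha as [x _ IH].
    intro Hx.
    set (r := fun y : {y : R | X y /\ lt y x} =>
                epsilon (inhabits ozero) (rk_rel X lt (proj1_sig y))).
    exists (Node _ r). constructor. intros [y [Hy Hyx]]. unfold r. simpl.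
    apply epsilon_spec. apply IH; auto. split; auto. }
  set (sg := fun x => epsilon (inhabits ozero) (rk_rel X lt x)).
  assert (Hsg : forall x, X x -> rk_rel X lt x (sg x)).
  { intros x Hx. unfold sg. apply epsilon_spec. auto. }
  exists sg. split.
  - intros x Hx. destruct (HG x Hx) as [d [Hd [tau [Ht1 Ht2]]]].
    assert (Hb : forall z b, rk_rel X lt z b -> X z -> lt z x -> ole b (tau z)).
    { intros z b H. induction H as [z r Hr IH]. intros Hz Hzx.
      apply ole_node_iff. intros [y [Hy Hyz]]. simpl.
      eapply ole_lt_trans. apply IH; simpl; auto. eapply Htr; eauto.
      apply Ht2; auto. split; auto. eapply Htr; eauto. }
    pose proof (Hsg x Hx) as H. assert (ole (sg x) d) as Hle.
    { revert H. generalize (sg x). intros o H. revert Hb. destruct H as [x r Hr]. intros Hb.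
      apply ole_node_iff. intros [y [Hy Hyx]]. simpl.
      eapply ole_lt_trans. apply Hb; eauto. apply Ht1. split; auto. }
    eapply ole_lt_trans; eauto.
  - intros x y Hx Hy Hyx. eapply rk_lt; eauto.
Qed.

Lemma CH s a e : ole s a -> olt a (oadd s (oexp e)) ->
  ole a s \/ exists e' n, olt e' e /\ olt a (oadd s (W e' n)).
Proof.
  intros H1 H2. apply lt_add_inv in H2. destruct H2 as [H2|[b' [Hb' H2]]].
  - exfalso. eapply ole_lt_false; eauto.
  - destruct (lt_oexp_inv _ _ Hb') as [H|[e' [n [He' Hn]]]].
    + left. eapply ole_trans. exact H2. apply add_le_zero. exact H.
    + right. exists e', (S n). split; auto. eapply ole_lt_trans. exact H2.
      apply add_lt_r. eapply ole_lt_trans. exact Hn. apply omul_lt_S.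
Qed.

Fixpoint Fn (c : Ord) (n : nat) : Ord :=
  match n with O => ozero | S m => nsum (Fn c m) (oexp c) end.

Lemma Fn_lt c' c n : olt (oexp c') (oexp c) -> olt (Fn c' n) (oexp c).
Proof. intro H. induction n; simpl. apply oexp_pos. apply H3; auto. Qed.

Lemma FIN lt (r : R -> Ord) (P : R -> Prop) e' c' s : rtrans lt ->
  (forall s'', HB lt (fun y => P y /\ ole s'' (r y) /\ olt (r y) (oadd s'' (oexp e'))) (oexp c')) ->
  forall n, HB lt (fun y => P y /\ ole s (r y) /\ olt (r y) (oadd s (W e' n))) (Fn c' n).
Proof.
  intros Htr HI. induction n.
  - apply HB_empty. intros y [_ [H1 H2]]. eapply ole_lt_false. exact H1.
    eapply olt_le_trans. exact H2. apply add_zero_r.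
  - simpl. eapply UNION. exact Htr. exact IHn. apply (HI (oadd s (W e' n))).
    intros y [Hy [H1 H2]]. destruct (ole_total (oadd s (W e' n)) (r y)) as [H|H].
    + right. split; auto. split; auto. eapply olt_le_trans. exact H2.
      unfold W. rewrite omul_S. apply add_assoc2.
    + left. auto.
Qed.


Lemma CELL lt (p q : R -> Ord) : rtrans lt ->
  (forall x y, lt y x -> olt (p y) (p x) \/ olt (q y) (q x)) ->
  forall e d s t (X : R -> Prop),
  (forall x, X x -> ole s (p x) /\ olt (p x) (oadd s (oexp e)) /\
                    ole t (q x) /\ olt (q x) (oadd t (oexp d))) ->
  HB lt X (oexp (nsum e d)).
Proof.
  intros Htr Hpq e. induction e as [e IHe] using ord_ind. intro d.
  induction d as [d IHd] using ord_ind. intros s t X HX.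
  apply GLUE; auto. intros x Hx.
  destruct (HX x Hx) as [Hp1 [Hp2 [Hq1 Hq2]]].
  assert (HA : exists FA, olt FA (oexp (nsum e d)) /\
            HB lt (fun y => (X y /\ lt y x) /\ olt (p y) (p x)) FA).
  { destruct (CH s (p x) e Hp1 Hp2) as [H|[e' [n [He' Hn]]]].
    - exists ozero. split. apply oexp_pos. apply HB_empty. intros y [[Hy _] Hyx].
      destruct (HX y Hy) as [Hy1 _]. eapply ole_lt_false. 2: exact Hyx.
      eapply ole_trans; eauto.
    - exists (Fn (nsum e' d) n). split.
      + apply Fn_lt. apply oexp_lt1. apply nsum_lt_l; auto. apply ole_refl.
      + eapply HB_sub. apply (FIN lt p (fun y => (X y /\ lt y x) /\ olt (p y) (p x)) e' (nsum e' d) s Htr).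
        * intros s''. apply (IHe e' He' d s'' t). intros y [[[Hy _] _] [H1 H2]].
          destruct (HX y Hy) as [_ [_ [Hy3 Hy4]]]. auto.
        * intros y [[Hy Hyx] Hpy]. destruct (HX y Hy) as [Hy1 _].
          split. auto. split. auto. eapply olt_trans; eauto. }
  assert (HB' : exists FB, olt FB (oexp (nsum e d)) /\
            HB lt (fun y => (X y /\ lt y x) /\ olt (q y) (q x)) FB).
  { destruct (CH t (q x) d Hq1 Hq2) as [H|[d' [n [Hd' Hn]]]].
    - exists ozero. split. apply oexp_pos. apply HB_empty. intros y [[Hy _] Hyx].
      destruct (HX y Hy) as [_ [_ [Hy1 _]]]. eapply ole_lt_false. 2: exact Hyx.
      eapply ole_trans; eauto.
    - exists (Fn (nsum e d') n). split.
      + apply Fn_lt. apply oexp_lt1. apply nsum_lt_r; auto. apply ole_refl.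
      + eapply HB_sub. apply (FIN lt q (fun y => (X y /\ lt y x) /\ olt (q y) (q x)) d' (nsum e d') t Htr).
        * intros t''. apply (IHd d' Hd' s t''). intros y [[[Hy _] _] [H1 H2]].
          destruct (HX y Hy) as [Hy3 [Hy4 _]]. auto.
        * intros y [[Hy Hyx] Hqy]. destruct (HX y Hy) as [_ [_ [Hy1 _]]].
          split. auto. split. auto. eapply olt_trans; eauto. }
  destruct HA as [FA [HFA HA]]. destruct HB' as [FB [HFB HB']].
  exists (nsum FA FB). split. apply H3; auto.
  eapply UNION. exact Htr. exact HA. exact HB'.
  intros y [Hy Hyx]. destruct (Hpq x y Hyx); [left|right]; auto.
Qed.

Lemma ROW lt (p q : R -> Ord) : rtrans lt ->
  (forall x y, lt y x -> olt (p y) (p x) \/ olt (q y) (q x)) ->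
  forall a s lb t (X : R -> Prop),
  (forall x, X x -> ole s (p x) /\ olt (p x) (oadd s (oexp a)) /\
                    ole t (q x) /\ olt (q x) (oadd t (cnf_val lb))) ->
  HB lt X (nsumL (map (nsum a) lb)).
Proof.
  intros Htr Hpq a s lb. induction lb as [|b lb IH]; intros t X HX.
  - apply HB_empty. intros x Hx. destruct (HX x Hx) as [_ [_ [H1 H2]]].
    eapply ole_lt_false. exact H1. eapply olt_le_trans. exact H2. apply add_zero_r.
  - cbn [map nsumL fold_right]. eapply UNION. exact Htr.
    + apply (CELL lt p q Htr Hpq a b s t (fun x => X x /\ olt (q x) (oadd t (oexp b)))).
      intros x [Hx H]. destruct (HX x Hx) as [H1 [H2 [H3 H4]]]. auto.
    + apply (IH (oadd t (oexp b)) (fun x => X x /\ ole (oadd t (oexp b)) (q x))).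
      intros x [Hx H]. destruct (HX x Hx) as [H1 [H2 [H3 H4]]]. repeat split; auto.
      eapply olt_le_trans. exact H4. cbn [cnf_val]. apply add_assoc2.
    + intros x Hx. destruct (ole_total (oadd t (oexp b)) (q x)); [right|left]; auto.
Qed.

Definition pexps (la lb : list Ord) := map (fun pr => nsum (fst pr) (snd pr)) (list_prod la lb).

Lemma FINAL lt (p q : R -> Ord) : rtrans lt ->
  (forall x y, lt y x -> olt (p y) (p x) \/ olt (q y) (q x)) ->
  forall la lb s t (X : R -> Prop),
  (forall x, X x -> ole s (p x) /\ olt (p x) (oadd s (cnf_val la)) /\
                    ole t (q x) /\ olt (q x) (oadd t (cnf_val lb))) ->
  HB lt X (nsumL (pexps la lb)).
Proof.
  intros Htr Hpq la lb. induction la as [|a la IH]; intros s t X HX.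
  - apply HB_empty. intros x Hx. destruct (HX x Hx) as [H1 [H2 _]].
    eapply ole_lt_false. exact H1. eapply olt_le_trans. exact H2. apply add_zero_r.
  - assert (pexps (a :: la) lb = map (nsum a) lb ++ pexps la lb) as E.
    { unfold pexps. simpl. rewrite map_app, map_map. reflexivity. }
    rewrite E. eapply HB_le. 2: apply nsumL_app2.
    eapply UNION. exact Htr.
    + apply (ROW lt p q Htr Hpq a s lb t (fun x => X x /\ olt (p x) (oadd s (oexp a)))).
      intros x [Hx H]. destruct (HX x Hx) as [H1 [H2 [H3 H4]]]. auto.
    + apply (IH (oadd s (oexp a)) t (fun x => X x /\ ole (oadd s (oexp a)) (p x))).
      intros x [Hx H]. destruct (HX x Hx) as [H1 [H2 [H3 H4]]]. repeat split; auto.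
      eapply olt_le_trans. exact H2. cbn [cnf_val]. apply add_assoc2.
    + intros x Hx. destruct (ole_total (oadd s (oexp a)) (p x)); [right|left]; auto.
Qed.

Open Scope R_scope.

Lemma dec_chain_tail u x l : dec_chain u (x :: l) -> dec_chain u l.
Proof. destruct l; simpl; tauto. Qed.

Lemma dec_chain_last2 u : forall l a b, dec_chain u (l ++ a :: b :: nil) -> b < a /\ u b < u a.
Proof.
  induction l as [|x l IH]; intros a b H. simpl in H. tauto.
  apply IH. eapply dec_chain_tail. exact H.
Qed.

Lemma dec_chain_snoc u : forall l z z', dec_chain u (l ++ z :: nil) -> z' < z -> u z' < u z ->
  dec_chain u (l ++ z :: z' :: nil).
Proof.
  induction l as [|x l IH]; intros z z' H H1 H2. simpl. tauto.
  destruct l as [|y l]; simpl in *. tauto.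
  destruct H as [A [B C]]. split; auto. split; auto. apply (IH z z'); auto.
Qed.

Lemma bad_last D u l a : bad D u (l ++ a :: nil) -> D a.
Proof.
  intros [H _]. apply Forall_app in H. destruct H as [_ H]. inversion H; auto.
Qed.

Lemma bad_last2 D u l a b : bad D u (l ++ a :: b :: nil) -> b < a /\ u b < u a /\ D a /\ D b.
Proof.
  intros [H1 H2]. apply dec_chain_last2 in H2. apply Forall_app in H1. destruct H1 as [_ H1].
  inversion H1 as [|? ? Ha Hrest]; subst. inversion Hrest; subst. tauto.
Qed.

Lemma bad_snoc D u l z z' : bad D u (l ++ z :: nil) -> D z' -> z' < z -> u z' < u z ->
  bad D u (l ++ z :: z' :: nil).
Proof.
  intros [H1 H2] Hd Hlt Hu. split.
  - apply Forall_app in H1. destruct H1 as [A B]. apply Forall_app. split; auto.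
    inversion B; subst. constructor; auto.
  - apply dec_chain_snoc; auto.
Qed.

Lemma app_snoc2 (l : list R) a b : (l ++ a :: nil) ++ b :: nil = l ++ a :: b :: nil.
Proof. rewrite <- app_assoc. reflexivity. Qed.

Lemma MONO D u : forall w b, height_of D u w b -> forall v a, height_of D u v a ->
  (forall z, bad D u (w ++ z :: nil) -> bad D u (v ++ z :: nil)) -> ole b a.
Proof.
  intros w b H. induction H as [w h Hh IH]. intros v a Ha Hsub.
  revert Hsub. destruct Ha as [h' Hh']. intros Hsub.
  simpl. intros [z Hz]. exists (exist _ z (Hsub z Hz)). apply (IH (exist _ z Hz) (v ++ z :: nil)).
  exact (Hh' (exist _ z (Hsub z Hz))). simpl. intros z' Hz'. rewrite app_snoc2 in *.
  pose proof (bad_last2 _ _ _ _ _ Hz') as [A [B [C E]]].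
  apply bad_snoc; auto.
Qed.

Lemma height_child D u v a y : height_of D u v a -> bad D u (v ++ y :: nil) ->
  exists b, height_of D u (v ++ y :: nil) b /\ olt b a.
Proof.
  intros H Hy. destruct H as [h Hh]. exists (h (exist _ y Hy)). split.
  apply (Hh (exist _ y Hy)). apply child_lt.
Qed.

Fixpoint seqV (next : list R -> R) (v0 : list R) (n : nat) : list R :=
  match n with O => v0 | S m => seqV next v0 m ++ next (seqV next v0 m) :: nil end.

Lemma heights_exist D u : ordinal_decreasing D u -> forall v, exists a, height_of D u v a.
Proof.
  intros Hod.
  pose (Rc := fun w v => exists x, w = v ++ x :: nil /\ bad D u (v ++ x :: nil)).
  assert (HAcc : forall v, Acc Rc v).
  { intro v0. apply NNPP. intro Hn.
    pose (next := fun v => epsilon (inhabits 0) (fun x => bad D u (v ++ x :: nil) /\ ~ Acc Rc (v ++ x :: nil))).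
    assert (Hnext : forall v, ~ Acc Rc v -> bad D u (v ++ next v :: nil) /\ ~ Acc Rc (v ++ next v :: nil)).
    { intros v Hv. unfold next. apply epsilon_spec. apply NNPP. intro H. apply Hv.
      constructor. intros w [x [Ew Hx]]. subst w. apply NNPP. intro Hw. apply H.
      exists x. auto. }
    assert (Hall : forall n, ~ Acc Rc (seqV next v0 n)).
    { induction n; simpl; auto. apply Hnext; auto. }
    apply Hod. exists (fun n => next (seqV next v0 n)). intro n.
    pose proof (proj1 (Hnext _ (Hall (S n)))) as H. simpl in H.
    rewrite app_snoc2 in H. apply bad_last2 in H. tauto. }
  intro v. induction (HAcc v) as [v _ IH].
  pose (h := fun x : {x : R | bad D u (v ++ x :: nil)} =>
               epsilon (inhabits ozero) (height_of D u (v ++ proj1_sig x :: nil))).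
  exists (Node _ h). constructor. intros [x Hx]. unfold h. simpl. apply epsilon_spec.
  apply IH. exists x. auto.
Qed.

Definition rk D u x := epsilon (inhabits ozero) (height_of D u (x :: nil)).

Lemma rk_spec D u x : ordinal_decreasing D u -> height_of D u (x :: nil) (rk D u x).
Proof. intro H. unfold rk. apply epsilon_spec. apply heights_exist. auto. Qed.

Lemma o_spec D u : ordinal_decreasing D u -> height_of D u nil (o D u).
Proof. intro H. unfold o. apply epsilon_spec. apply heights_exist. auto. Qed.

Lemma bad2 D u x y : D x -> D y -> y < x -> u y < u x -> bad D u (x :: y :: nil).
Proof. intros. split. repeat constructor; auto. simpl. tauto. Qed.

Lemma RK1 D u x y : ordinal_decreasing D u -> D x -> D y -> y < x -> u y < u x ->
  olt (rk D u y) (rk D u x).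
Proof.
  intros Hod Hx Hy H1 H2.
  destruct (height_child D u (x :: nil) (rk D u x) y (rk_spec D u x Hod)) as [b [Hb Hbl]].
  { apply bad2; auto. }
  eapply ole_lt_trans. 2: exact Hbl. eapply MONO. apply rk_spec; auto. exact Hb.
  intros z Hz. simpl in Hz. change (y :: z :: nil) with ((nil ++ y :: nil) ++ z :: nil) in Hz.
  rewrite app_snoc2 in Hz. apply bad_last2 in Hz. destruct Hz as [A [B [C E]]].
  simpl. apply (bad_snoc D u (x :: nil) y z); auto. apply bad2; auto.
Qed.

Lemma RK2 D u x : ordinal_decreasing D u -> D x -> olt (rk D u x) (o D u).
Proof.
  intros Hod Hx.
  destruct (height_child D u nil (o D u) x (o_spec D u Hod)) as [b [Hb Hbl]].
  { split. repeat constructor; auto. simpl. auto. }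
  eapply ole_lt_trans. 2: exact Hbl. eapply MONO. apply rk_spec; auto. exact Hb.
  simpl. auto.
Qed.

Lemma insert_sorted : forall l x, StronglySorted ROrd l ->
  exists l', Permutation (x :: l) l' /\ StronglySorted ROrd l'.
Proof.
  induction l as [|y l IH]; intros x Hl.
  - exists (x :: nil). split. auto. repeat constructor.
  - inversion Hl as [|? ? Hl2 Hf]; subst.
    destruct (ole_total y x) as [H|H].
    + exists (x :: y :: l). split. auto. constructor; auto. constructor. exact H.
      eapply Forall_impl. 2: exact Hf. intros a Ha. unfold ROrd in *. eapply ole_trans; eauto.
    + destruct (IH x Hl2) as [l'' [Hp Hs]]. exists (y :: l''). split.
      * eapply perm_trans. apply perm_swap. apply perm_skip. exact Hp.
      * constructor; auto. apply Forall_forall. intros a Ha.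
        apply Permutation_sym in Hp. eapply Permutation_in in Ha; eauto.
        destruct Ha as [Ha|Ha]. subst. apply olt_ole. exact H.
        rewrite Forall_forall in Hf. auto.
Qed.

Lemma sort_exists : forall l, exists l', Permutation l l' /\ StronglySorted ROrd l'.
Proof.
  induction l as [|x l IH]. exists nil. split; auto. constructor.
  destruct IH as [l' [Hp Hs]]. destruct (insert_sorted l' x Hs) as [l'' [Hp' Hs']].
  exists l''. split; auto. eapply perm_trans. apply perm_skip. exact Hp. exact Hp'.
Qed.

Lemma cnf_exists' a : exists L, is_cnf L a /\ StronglySorted ROrd L.
Proof.
  destruct (cnf_exists a) as [L [H1 H2]]. exists L. split; auto. split; auto.
  apply StronglySorted_Sorted. exact H1.
Qed.

Lemma natsum_exists a b : exists c, natsum a b c /\ ole (nsum a b) c.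
Proof.
  destruct (cnf_exists' a) as [la [[_ [Ha1 Ha2]] Hsa]].
  destruct (cnf_exists' b) as [lb [[_ [Hb1 Hb2]] Hsb]].
  destruct (sort_exists (la ++ lb)) as [lc [Hp Hs]].
  exists (cnf_val lc). split.
  - exists la, lb, lc. split. split. apply StronglySorted_Sorted; auto. split; auto.
    split. split. apply StronglySorted_Sorted; auto. split; auto.
    split. split. apply StronglySorted_Sorted; auto. apply oeq_refl. exact Hp.
  - eapply ole_trans. apply nsum_mono; eauto.
    eapply ole_trans. apply nsum_mono; apply bridgeB'.
    eapply ole_trans. apply nsumL_app2.
    eapply ole_trans. apply nsumL_perm. exact Hp. apply bridgeB; auto.
Qed.

Lemma lab_exists : forall L : list (Ord * Ord), exists lab,
  Forall2 (fun p c => natsum (fst p) (snd p) c) L lab /\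
  Forall2 ole (map (fun pr => nsum (fst pr) (snd pr)) L) lab.
Proof.
  induction L as [|[a b] L IH]. exists nil. split; constructor.
  destruct IH as [lab [H1 H2]]. destruct (natsum_exists a b) as [c [Hc1 Hc2]].
  exists (c :: lab). split; constructor; auto.
Qed.

Theorem lemma11 (D : R -> Prop) (f g : R -> R) :
  ordinal_decreasing D f -> ordinal_decreasing D g ->
  ordinal_decreasing D (fun x => f x + g x) /\
  exists gamma, natprod (o D f) (o D g) gamma /\
    ole (o D (fun x => f x + g x)) gamma.
Proof.
  intros Hf Hg.
  set (h := fun x => f x + g x).
  set (lth := fun y x => D y /\ D x /\ y < x /\ h y < h x).
  assert (Htr : rtrans lth).
  { intros x y z [A [B [C E]]] [A' [B' [C' E']]]. unfold lth. repeat split; auto; lra. }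
  assert (Hpq : forall x y, lth y x -> olt (rk D f y) (rk D f x) \/ olt (rk D g y) (rk D g x)).
  { intros x y [A [B [C E]]]. unfold h in E.
    destruct (Rlt_dec (f y) (f x)) as [H|H].
    - left. apply RK1; auto.
    - right. apply RK1; auto. lra. }
  destruct (cnf_exists' (o D f)) as [la [Hla Hsa]].
  destruct (cnf_exists' (o D g)) as [lb [Hlb Hsb]].
  assert (HB1 : HB lth D (nsumL (pexps la lb))).
  { apply (FINAL lth (rk D f) (rk D g) Htr Hpq la lb ozero ozero D).
    intros x Hx. destruct Hla as [_ [Ha _]]. destruct Hlb as [_ [Hb _]].
    repeat split; try apply ozero_le.
    - eapply olt_le_trans. apply RK2; auto. eapply ole_trans. exact Ha. apply le_add_r.
    - eapply olt_le_trans. apply RK2; auto. eapply ole_trans. exact Hb. apply le_add_r. }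
  destruct (lab_exists (list_prod la lb)) as [lab [Hlab1 Hlab2]].
  destruct (sort_exists lab) as [lc [Hp Hs]].
  assert (HB2 : HB lth D (cnf_val lc)).
  { eapply HB_le. exact HB1.
    eapply ole_trans. apply nsumL_mono. exact Hlab2.
    eapply ole_trans. apply nsumL_perm. exact Hp. apply bridgeB; auto. }
  destruct HB2 as [sg [Hsg1 Hsg2]].
  assert (Hod : ordinal_decreasing D h).
  { intros [s Hs']. 
    assert (forall o n, sg (s n) = o -> False) as K.
    { induction o as [o IH] using ord_ind. intros n E.
      refine (IH (sg (s (S n))) _ (S n) eq_refl).
      rewrite <- E. destruct (Hs' n) as [A [B C]]. destruct (Hs' (S n)) as [A' _].
      apply Hsg2; auto. unfold lth. auto. }
    exact (K _ 0%nat eq_refl). }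
  split. exact Hod.
  exists (cnf_val lc). split.
  - exists la, lb, lab, lc. split. exact Hla. split. exact Hlb. split.
    split. apply StronglySorted_Sorted; auto. apply oeq_refl.
    split. exact Hlab1. exact Hp.
  - set (Phi := fun v : list R => match rev v with nil => cnf_val lc | x :: _ => sg x end).
    assert (K : forall v a, height_of D h v a -> ole a (Phi v)).
    { intros v a H. induction H as [v hh Hh IH]. apply ole_node_iff. intros [z Hz].
      eapply ole_lt_trans. apply IH. simpl. unfold Phi. rewrite rev_unit.
      unfold Phi. destruct (rev v) as [|x r] eqn:Ev.
      - apply Hsg1. eapply bad_last; eauto.
      - assert (v = rev r ++ x :: nil) as Ev'.
        { rewrite <- (rev_involutive v), Ev. reflexivity. }
        rewrite Ev', app_snoc2 in Hz. apply bad_last2 in Hz. destruct Hz as [A [B [C E]]].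
        apply Hsg2; auto. unfold lth. auto. }
    apply (K nil). apply o_spec. exact Hod.
Qed.
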